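(* Let $n=3^27^2=441$ and let $\mathcal{D}_{S_1},\mathcal{D}_{S_2}\subseteq\mathcal{D}_{[441]}\setminus\{441\}$ be such that $\mathcal{D}_{S_1}\setminus\mathcal{D}_{S_2}=\{3\}$, $\mathcal{D}_{S_2}\setminus\mathcal{D}_{S_1}=\{9,7,49\}$, and $1\in\mathcal{D}_{S_1}\cap\mathcal{D}_{S_2}$. Then $\mathrm{Spec}(\mathrm{ICG}(441,\mathcal{D}_{S_1}))\neq\mathrm{Spec}(\mathrm{ICG}(441,\mathcal{D}_{S_2}))$.
   Context: Identify $\mathbb{Z}_n$ with $[n]=\{1,\dots,n\}$. For a divisor $d$ of $n$, $G_n(d)=\{j\in[n]:\gcd(j,n)=d\}$; $\mathcal{D}_{[n]}$ is the set of positive divisors of $n$. For $\mathcal{D}\subseteq\mathcal{D}_{[n]}\setminus\{n\}$, $\mathrm{ICG}(n,\mathcal{D})=\mathrm{Cay}(\mathbb{Z}_n,S)$ with $S=\bigcup_{d\in\mathcal{D}}G_n(d)$, and $\mathcal{D}=\mathcal{D}_S$. $\mathrm{Spec}$ is the multiset of adjacency eigenvalues. *)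

(* Defs.v *)
From mathcomp Require Import all_boot all_order all_algebra all_field.
Set Implicit Arguments. Unset Strict Implicit. Unset Printing Implicit Defensive.
Import GRing.Theory Num.Theory.
Local Open Scope ring_scope.

(* Z_n is represented by the ordinals 'I_n (residue 0 plays the role of n in
   [n] = {1,...,n}; gcdn 0 n = n = gcd(n,n), so the convention agrees).
   A divisor set D is a boolean predicate on nat. *)

(* S = union of G_n(d), d in D : the residues j with gcd(j,n) in D. *)
Definition ICG_conn (n : nat) (D : pred nat) : pred nat :=
  fun j => D (gcdn (j %% n) n).

Definition ICG_adj (n : nat) (D : pred nat) : 'M[algC]_n :=
  \matrix_(i < n, j < n) (ICG_conn n D ((j + n - i) %% n)%N)%:R.

(* Spectrum as a multiset of eigenvalues: eigenvalue x has multiplicity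
   equal to its multiplicity as a root of the characteristic polynomial. *)
Definition Spec (n : nat) (A : 'M[algC]_n) : algC -> nat :=
  fun x => mup x (char_poly A).

(* Main.v *)
Require Import Defs.
From mathcomp Require Import all_boot all_order all_algebra all_field.
From mathcomp Require Import zify.
Set Implicit Arguments. Unset Strict Implicit. Unset Printing Implicit Defensive.
Import GRing.Theory Num.Theory.

Lemma nth_rot_mod (T : Type) (x : T) (s : seq T) a i :
  a <= size s -> i < size s -> nth x (rot a s) i = nth x s ((i + a) %% size s).
Proof.
move=> ha hi; rewrite /rot nth_cat size_drop.
case: ifP => h.
  by rewrite nth_drop modn_small addnC // -ltn_subRL.
move/negbT: h; rewrite -leqNgt => h.
have e : i + a = (i - (size s - a)) + size s by lia.
rewrite e modnDr modn_small; last by lia.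
by rewrite nth_take //; lia.
Qed.

Section G.
Variable m : nat.
Local Notation N := m.+1.
Definition L (c : nat -> bool) := [seq c i | i <- iota 0 N].
Definition K0 (c : nat -> bool) := [seq c ((N - i) %% N) | i <- iota 0 N].
Definition Nf (c : nat -> bool) : nat :=
  let l := L c in let k := K0 c in
  sumn [seq (nth false l a : nat) * sumn [seq (x.1 && x.2 : nat) | x <- zip l (rot a k)] | a <- iota 0 N].
Definition Nsum (c : nat -> bool) : nat :=
  \sum_(a < N) \sum_(b < N) (c a * c b * c (val (- (a + b) : 'I_N)%R))%N.

Lemma sumn_iota (G : nat -> nat) k : sumn [seq G i | i <- iota 0 k] = \sum_(i < k) G i.
Proof. by rewrite sumnE big_map -(big_mkord xpredT) /index_iota subn0. Qed.

Lemma sumn_zip (l r : seq bool) k : size l = k -> size r = k ->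
  sumn [seq (x.1 && x.2 : nat) | x <- zip l r] = \sum_(b < k) (nth false l b && nth false r b : nat).
Proof.
move=> hl hr.
have -> : zip l r = [seq (nth false l b, nth false r b) | b <- iota 0 k].
  apply: (@eq_from_nth _ (false, false)); first by rewrite size_zip size_map size_iota hl hr minnn.
  move=> i; rewrite size_zip hl hr minnn => him.
  by rewrite nth_zip ?hl ?hr // (nth_map 0) ?size_iota // nth_iota.
by rewrite -map_comp sumn_iota.
Qed.

Lemma Nsum_Nf c : Nsum c = Nf c.
Proof.
rewrite /Nf sumn_iota /Nsum; apply: eq_bigr => a _.
rewrite (nth_map 0) ?size_iota // nth_iota // add0n.
rewrite (sumn_zip (k := N)) ?size_rot ?size_map ?size_iota // big_distrr /=.
apply: eq_bigr => b _; rewrite -mulnA; congr (_ * _)%N.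
rewrite -mulnb.
rewrite (nth_map 0) ?size_iota // nth_iota // add0n.
rewrite nth_rot_mod ?size_map ?size_iota //; last by apply: ltnW.
rewrite (nth_map 0) ?size_iota ?ltn_pmod // nth_iota ?ltn_pmod // add0n.
by rewrite /= addnC.
Qed.
End G.

Section Circ.
Local Open Scope ring_scope.
Variable n : nat.
Local Notation N := n.+1.
Variable w : algC.
Hypothesis prim_w : N.-primitive_root w.
Variable f : 'I_N -> algC.

Definition Cm : 'M[algC]_N := \matrix_(i, j) f (j - i).
Definition lam (k : 'I_N) : algC := \sum_(s < N) f s * (w ^+ k) ^+ s.
Definition Fm : 'M[algC]_N := \matrix_(i, k) (w ^+ k) ^+ i.
Definition Dm : 'M[algC]_N := diag_mx (\row_k lam k).

Lemma wkN (k : nat) : (w ^+ k) ^+ N = 1.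
Proof. by rewrite exprAC (prim_expr_order prim_w); apply: expr1n. Qed.

Lemma CF : Cm *m Fm = Fm *m Dm.
Proof.
apply/matrixP => i k; rewrite mul_mx_diag !mxE.
rewrite (reindex_inj (addrI i)) /= /lam mulr_sumr; apply: eq_bigr => s _.
rewrite !mxE addrC addKr.
have -> : ((i + s)%R : 'I_N) = ((i + s) %% N)%N :> nat by [].
by rewrite expr_mod ?wkN // exprD mulrCA.
Qed.

Lemma Funit : Fm \in unitmx.
Proof.
rewrite unitmxE unitfE.
have -> : Fm = Vandermonde N (\row_k w ^+ k) by apply/matrixP => i k; rewrite !mxE.
rewrite det_Vandermonde; apply/prodf_neq0 => i _; apply/prodf_neq0 => j ltij.
rewrite !mxE subr_eq0 eq_sym (eq_prim_root_expr prim_w) !modn_small //.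
by rewrite neq_ltn ltij.
Qed.


Lemma char_Cm : char_poly Cm = \prod_(k < N) ('X - (lam k)%:P).
Proof.
have -> : \prod_(k < N) ('X - (lam k)%:P) = char_poly Dm.
  by rewrite char_poly_trig ?diag_mx_is_trig //; apply: eq_bigr => k _; rewrite !mxE eqxx.
set FP := map_mx polyC Fm.
have E : char_poly_mx Cm *m FP = FP *m char_poly_mx Dm.
  rewrite /char_poly_mx mulmxBl mulmxBr scalar_mxC -!map_mxM CF //.
have dF : \det FP != 0.
  rewrite det_map_mx polyC_eq0 -unitfE -unitmxE; exact: Funit.
have := congr1 determinant E; rewrite !det_mulmx.
by rewrite [X in _ = X]mulrC => /(mulIf dF).
Qed.

Lemma tr_Cm3 : \tr (Cm *m Cm *m Cm) = \sum_(k < N) lam k ^+ 3.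
Proof.
have E : Cm = Fm *m Dm *m invmx Fm by rewrite -CF mulmxK // Funit.
rewrite E !mulmxA !mulmxKV ?Funit // mxtrace_mulC !mulmxA mulVmx ?Funit // mul1mx.
rewrite !mulmx_diag mxtrace_diag; apply: eq_bigr => k _; rewrite !mxE.
by rewrite !exprS expr0 mulr1 mulrA.
Qed.


Lemma tr_Cm3_comb :
  \tr (Cm *m Cm *m Cm) = (\sum_(a < N) \sum_(b < N) f a * f b * f (- (a + b))) *+ N.
Proof.
set T := (\sum_(a < N) _); rewrite /mxtrace -[X in T *+ X](card_ord N) -sumr_const; apply: eq_bigr => i _.
rewrite !mxE.
under eq_bigr => l _ do rewrite !mxE (reindex_inj (addrI i)) /= mulr_suml.
rewrite exchange_big /=; apply: eq_bigr => a _.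
rewrite (reindex_inj (addrI (i + a))) /=; apply: eq_bigr => b _.
rewrite !mxE addrC addKr [(i + a + b) - (i + a)]addrC addKr.
rewrite -addrA opprD addrA subrr add0r.
done.
Qed.


Lemma val_sub (i j : 'I_N) : ((j + N - i) %% N)%N = val (j - i).
Proof. by rewrite /= modnDmr addnBA // ltnW. Qed.

Lemma mup_Cm x : mup x (char_poly Cm) = count_mem x [seq lam k | k <- index_enum 'I_N].
Proof. by rewrite -mu_prod_XsubC big_map char_Cm. Qed.

Lemma sum_cubes : \sum_(k < N) lam k ^+ 3 = \sum_(y <- [seq lam k | k <- index_enum 'I_N]) y ^+ 3.
Proof. by rewrite big_map. Qed.

End Circ.

Section Nat.
Local Open Scope ring_scope.
Lemma T_nat m (c : nat -> bool) :
  \sum_(a < m.+1) \sum_(b < m.+1) ((c a)%:R * (c b)%:R * (c (val (- (a + b) : 'I_m.+1)))%:R : algC)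
  = (Nsum m c)%:R.
Proof.
rewrite /Nsum natr_sum; apply: eq_bigr => a _; rewrite natr_sum; apply: eq_bigr => b _.
by rewrite !natrM.
Qed.
End Nat.


Definition DD (b21 b63 b147 : bool) (two : bool) (d : nat) : bool :=
  [|| d == 1, if two then [|| d == 9, d == 7 | d == 49] else d == 3,
      (d == 21) && b21, (d == 63) && b63 | (d == 147) && b147].
Definition cc b21 b63 b147 two (s : nat) : bool := DD b21 b63 b147 two (gcdn (s %% 441) 441).

Lemma final_neq b1 b2 b3 : Nf 440 (cc b1 b2 b3 false) != Nf 440 (cc b1 b2 b3 true).
Proof. by case: b1; case: b2; case: b3; vm_compute. Qed.

Lemma div441 d : (d %| 441)%N -> d \in [:: 1; 3; 7; 9; 21; 49; 63; 147; 441]%N.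
Proof.
move=> h; have hd : (d < 442)%N by rewrite ltnS dvdn_leq.
have A : all (fun d => (d %| 441)%N ==> (d \in [:: 1; 3; 7; 9; 21; 49; 63; 147; 441]%N)) (iota 0 442).
  by vm_compute.
by move/allP: A => /(_ d); rewrite mem_iota /= hd h; apply.
Qed.

Lemma red (D1 D2 : pred nat) :
  (forall d, D1 d -> (d %| 441)%N /\ d != 441%N) ->
  (forall d, D2 d -> (d %| 441)%N /\ d != 441%N) ->
  (forall d, (D1 d && ~~ D2 d) = (d == 3%N)) ->
  (forall d, (D2 d && ~~ D1 d) = (d \in [:: 9; 7; 49]%N)) ->
  D1 1%N && D2 1%N ->
  (ICG_conn 441 D1 =1 cc (D1 21%N) (D1 63%N) (D1 147%N) false) /\
  (ICG_conn 441 D2 =1 cc (D1 21%N) (D1 63%N) (D1 147%N) true).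
Proof.
move=> h1 h2 h3 h4 /andP[o1 o2].
have n1 : D1 441 = false by apply/negP => /h1 [] _ /eqP.
have n2 : D2 441 = false by apply/negP => /h2 [] _ /eqP.
have /andP[d13 /negbTE d23] : D1 3 && ~~ D2 3 by rewrite h3.
have /andP[d29 /negbTE d19] : D2 9 && ~~ D1 9 by rewrite h4.
have /andP[d27 /negbTE d17] : D2 7 && ~~ D1 7 by rewrite h4.
have /andP[d249 /negbTE d149] : D2 49 && ~~ D1 49 by rewrite h4.
have e21 : D2 21 = D1 21.
  have A : D1 21 && ~~ D2 21 = false by rewrite h3.
  have B : D2 21 && ~~ D1 21 = false by rewrite h4.
  by move: A B; case: (D1 21); case: (D2 21).
have e63 : D2 63 = D1 63.
  have A : D1 63 && ~~ D2 63 = false by rewrite h3.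
  have B : D2 63 && ~~ D1 63 = false by rewrite h4.
  by move: A B; case: (D1 63); case: (D2 63).
have e147 : D2 147 = D1 147.
  have A : D1 147 && ~~ D2 147 = false by rewrite h3.
  have B : D2 147 && ~~ D1 147 = false by rewrite h4.
  by move: A B; case: (D1 147); case: (D2 147).
split=> s; rewrite /ICG_conn /cc;
  have := div441 (dvdn_gcdr (s %% 441) 441);
  move: (gcdn _ _) => g hg.
  suff: all (fun g => D1 g == DD (D1 21%N) (D1 63%N) (D1 147%N) false g) [:: 1; 3; 7; 9; 21; 49; 63; 147; 441]%N.
    by move/allP/(_ g hg)/eqP.
  rewrite /= /DD /= o1 d13 d19 d17 d149 n1.
  by case: (D1 21); case: (D1 63); case: (D1 147).
suff: all (fun g => D2 g == DD (D1 21%N) (D1 63%N) (D1 147%N) true g) [:: 1; 3; 7; 9; 21; 49; 63; 147; 441]%N.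
  by move/allP/(_ g hg)/eqP.
rewrite /= /DD /= o2 d23 d29 d27 d249 n2 e21 e63 e147.
by case: (D1 21); case: (D1 63); case: (D1 147).
Qed.

Section Main.
Local Open Scope ring_scope.
Lemma natMn_inj (a b k : nat) : (0 < k)%N -> (a%:R *+ k = b%:R *+ k :> algC) -> a = b.
Proof.
move=> hk /eqP; rewrite -!mulrnA eqr_nat.
by rewrite (eqn_pmul2r hk) => /eqP.
Qed.

Local Open Scope ring_scope.
Lemma ICG_Cm (D : pred nat) b1 b2 b3 two :
  ICG_conn 441 D =1 cc b1 b2 b3 two ->
  ICG_adj 441 D = Cm (n := 440) (fun s => (cc b1 b2 b3 two s)%:R).
Proof.
move=> h; apply/matrixP => i j; rewrite !mxE h.
by rewrite (val_sub i j).
Qed.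

Lemma main_aux (c1 c2 : nat -> bool) :
  Spec (Cm (n := 440) (fun s => (c1 s)%:R)) = Spec (Cm (n := 440) (fun s => (c2 s)%:R)) ->
  Nf 440 c1 = Nf 440 c2.
Proof.
move=> HS.
have [w pw] := C_prim_root_exists (isT : (0 < 441)%N).
set f1 := (fun s : 'I_441 => (c1 s)%:R : algC).
set f2 := (fun s : 'I_441 => (c2 s)%:R : algC).
have P : perm_eq [seq lam w f1 k | k <- index_enum 'I_441] [seq lam w f2 k | k <- index_enum 'I_441].
  apply/allP => x _; apply/eqP.
  by rewrite -!mup_Cm //; have := congr1 (fun F => F x) HS.
have T := tr_Cm3 pw f1; rewrite sum_cubes (perm_big _ P) -sum_cubes -tr_Cm3 // in T.
rewrite !tr_Cm3_comb !T_nat in T.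
move: T => /(natMn_inj (isT : (0 < 441)%N)).
by rewrite !Nsum_Nf.
Qed.
End Main.

Theorem lemma3p26 (D1 D2 : pred nat) :
  (forall d, D1 d -> (d %| 441)%N /\ d != 441%N) ->
  (forall d, D2 d -> (d %| 441)%N /\ d != 441%N) ->
  (forall d, (D1 d && ~~ D2 d) = (d == 3%N)) ->
  (forall d, (D2 d && ~~ D1 d) = (d \in [:: 9; 7; 49]%N)) ->
  D1 1%N && D2 1%N ->
  Spec (ICG_adj 441 D1) <> Spec (ICG_adj 441 D2).
Proof.
move=> h1 h2 h3 h4 h5 HS.
have [r1 r2] := red h1 h2 h3 h4 h5.
rewrite (ICG_Cm r1) (ICG_Cm r2) in HS.
have := main_aux HS; apply/eqP; exact: final_neq.
Qed.
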